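(* Let $\mathcal{A}=\{1,\dots,N\}$, $\boldsymbol{\lambda}\in\mathbb{R}_+^N$, $\boldsymbol{\delta}\in\mathbb{R}^N$ with $\delta_i>0$, $B\in\mathbb{R}_+^{N\times N}$ with zero diagonal whose associated directed graph is weakly connected but not strongly connected, $\mathcal{S}\subset\mathbb{R}_+^N$ convex, and $q_i:\mathbb{R}_+\to(0,1]$ decreasing, strictly convex, continuously differentiable. For $\mathbf{s}\in\mathcal{S}$ and $\epsilon\ge0$ define $$\mathbf{g}^{\mathbf{s}}(\epsilon,\mathbf{p})=(\mathbf{1}-\mathbf{p})\circ(\boldsymbol{\lambda}+\epsilon\mathbf{1}+B\mathbf{p})-\mathbf{q}(\mathbf{s})^{-1}\circ\boldsymbol{\delta}\circ\mathbf{p},$$ so that $$\partial_{\mathbf{p}}\mathbf{g}^{\mathbf{s}}(\epsilon,\mathbf{p})=\mathrm{diag}(\mathbf{1}-\mathbf{p})B-\mathrm{diag}\big(\mathbf{q}(\mathbf{s})^{-1}\circ\boldsymbol{\delta}+\boldsymbol{\lambda}+\epsilon\mathbf{1}+B\mathbf{p}\big).$$ For $\epsilon>0$ let $\bar{\mathbf{p}}^\epsilon(\mathbf{s})>\mathbf{0}$ be the unique strictly positive solution of $\mathbf{g}^{\mathbf{s}}(\epsilon,\mathbf{p})=\mathbf{0}$. Then for every $\epsilon>0$, the matrix $-\partial_{\mathbf{p}}\mathbf{g}^{\mathbf{s}}(\epsilon,\bar{\mathbf{p}}^\epsilon(\mathbf{s}))$ is a nonsingular M-matrix.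
   Context: $\circ$ is the element-wise product; $\mathbf{q}(\mathbf{s})=(q_i(s_i))_i$, $\mathbf{q}(\mathbf{s})^{-1}$ its element-wise inverse; $\mathrm{diag}(\mathbf{x})$ is the diagonal matrix with diagonal $\mathbf{x}$. A Z-matrix is a square matrix with nonpositive off-diagonal and nonnegative diagonal entries; an M-matrix is a Z-matrix of the form $sI-C$ with $C$ entrywise nonnegative and $s\ge\rho(C)$ (spectral radius). The associated graph has an edge $(j,i)$ iff $b_{i,j}>0$. *)

(* Defs.v *)
From HB Require Import structures.
From mathcomp Require Import all_boot all_order all_algebra.
From mathcomp Require Import all_classical all_reals all_analysis.
From mathcomp Require Import complex.
Set Implicit Arguments. Unset Strict Implicit. Unset Printing Implicit Defensive.
Import Order.TTheory GRing.Theory Num.Theory.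
Local Open Scope ring_scope.
Local Open Scope classical_set_scope.

Section Defs.
Variable R : realType.

Definition Zmatrix (n : nat) (A : 'M[R]_n) : Prop :=
  (forall i j : 'I_n, i != j -> A i j <= 0) /\ (forall i : 'I_n, 0 <= A i i).

Definition spectral_radius_le (n : nat) (C : 'M[R]_n) (s : R) : Prop :=
  forall mu : R[i], eigenvalue (map_mx (fun x : R => (x%:C)%C) C) mu ->
    `|mu| <= (s%:C)%C.

Definition Mmatrix (n : nat) (A : 'M[R]_n) : Prop :=
  Zmatrix A /\
  exists (s : R) (C : 'M[R]_n),
    (forall i j, 0 <= C i j) /\ A = s%:M - C /\ spectral_radius_le C s.

Definition nonsingular_Mmatrix (n : nat) (A : 'M[R]_n) : Prop :=
  Mmatrix A /\ A \in unitmx.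

Definition graph_edge (n : nat) (B : 'M[R]_n) : rel 'I_n :=
  fun j i => 0 < B i j.

Definition strongly_connected (n : nat) (B : 'M[R]_n) : Prop :=
  forall u v : 'I_n, connect (graph_edge B) u v.

Definition weakly_connected (n : nat) (B : 'M[R]_n) : Prop :=
  forall u v : 'I_n,
    connect (fun a b => graph_edge B a b || graph_edge B b a) u v.

Definition gs (n : nat) (lam del : 'I_n -> R) (B : 'M[R]_n)
  (q : 'I_n -> R -> R) (s : 'I_n -> R) (eps : R) (p : 'I_n -> R) : 'I_n -> R :=
  fun i => (1 - p i) * (lam i + eps + \sum_(j < n) B i j * p j)
           - (q i (s i))^-1 * del i * p i.

Definition dgs (n : nat) (lam del : 'I_n -> R) (B : 'M[R]_n)
  (q : 'I_n -> R -> R) (s : 'I_n -> R) (eps : R) (p : 'I_n -> R) : 'M[R]_n :=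
  \matrix_(i, j) ((1 - p i) * B i j
     - (i == j)%:R * ((q i (s i))^-1 * del i + lam i + eps
                      + \sum_(k < n) B i k * p k)).

End Defs.

(* Main.v *)
Require Import Defs.
From HB Require Import structures.
From mathcomp Require Import all_boot all_order all_algebra.
From mathcomp Require Import all_classical all_reals all_analysis.
From mathcomp Require Import complex.
From mathcomp Require Import ring lra.
Import Order.TTheory GRing.Theory Num.Theory numFieldNormedType.Exports.
Local Open Scope ring_scope.

Lemma core (R : realType) (n : nat) (C : 'M[R]_n) (p : 'I_n -> R) (s : R)
  (hC : forall i j, 0 <= C i j) (hp : forall i, 0 < p i)
  (hrow : forall i, \sum_j C i j * p j < s * p i)
  (x : 'I_n -> R[i]) (mu : R[i])
  (heig : forall i, \sum_j real_complex R (C i j) * x j = mu * x i)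
  (k : 'I_n) (hk : x k != 0) : `|mu| < real_complex R s.
Proof.
pose nx j := complex.Re `|x j|.
have nxE j : `|x j| = real_complex R (nx j) by rewrite RRe_real // normr_real.
have nx0 j : 0 <= nx j by rewrite -(@ler0c R) -nxE.
have nxk : 0 < nx k by rewrite -(@ltcR R) -nxE normr_gt0.
pose r := complex.Re `|mu|.
have rE : `|mu| = real_complex R r by rewrite RRe_real // normr_real.
pose g j := nx j / p j.
pose i := Order.arg_max k xpredT g.
have hmax : forall j, g j <= g i.
  by move=> j; rewrite /i; case: arg_maxP => // i0 _ H; apply: H.
have gk : 0 < g k by rewrite divr_gt0.
have gi : 0 < g i by apply: lt_le_trans (hmax k).
have nxi : 0 < nx i.
  by move: gi; rewrite /g pmulr_lgt0 // invr_gt0.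
have h1 : r * nx i <= \sum_j C i j * nx j.
  rewrite -(@lecR R) rmorphM /= -rE -nxE -normrM -heig rmorph_sum /=.
  apply: le_trans (ler_norm_sum _ _ _) _; apply: ler_sum => j _.
  by rewrite normrM nxE rmorphM /= ger0_norm // ler0c.
have h2 : \sum_j C i j * nx j <= g i * \sum_j C i j * p j.
  rewrite mulr_sumr; apply: ler_sum => j _.
  rewrite mulrCA; apply: ler_wpM2l => //.
  have := hmax j; rewrite /g ler_pdivrMr //.
have h3 : g i * \sum_j C i j * p j < g i * (s * p i).
  by rewrite ltr_pM2l.
have h4 : g i * (s * p i) = s * nx i.
  by rewrite /g mulrCA mulrA -mulrA divfK ?gt_eqF.
rewrite rE ltcR.
have : r * nx i < s * nx i by apply: le_lt_trans h1 _; rewrite -h4; apply: le_lt_trans h2 h3.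
by rewrite ltr_pM2r.
Qed.
Local Open Scope classical_set_scope.
Theorem lemma2 (R : realType) (N : nat)
  (lam del : 'I_N -> R) (B : 'M[R]_N) (S : set ('I_N -> R))
  (q : 'I_N -> R -> R)
  (hlam : forall i, 0 <= lam i)
  (hdel : forall i, 0 < del i)
  (hB : forall i j, 0 <= B i j)
  (hBdiag : forall i, B i i = 0)
  (hweak : weakly_connected B)
  (hnstrong : ~ strongly_connected B)
  (hSpos : forall x, S x -> forall i, 0 <= x i)
  (hSconv : forall x y (t : R), S x -> S y -> 0 <= t -> t <= 1 ->
              S (fun i => t * x i + (1 - t) * y i))
  (hqrange : forall i (x : R), 0 <= x -> 0 < q i x /\ q i x <= 1)
  (hqdecr : forall i (x y : R), 0 <= x -> x < y -> q i y < q i x)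
  (hqconv : forall i (x y t : R), 0 <= x -> 0 <= y -> x != y -> 0 < t -> t < 1 ->
              q i (t * x + (1 - t) * y) < t * q i x + (1 - t) * q i y)
  (hqdiff : forall i (x : R), 0 <= x -> derivable (q i) x 1)
  (hqC1 : forall i, {within [set x : R | 0 <= x], continuous ((q i)^`() : R -> R)})
  (s : 'I_N -> R) (hs : S s)
  (eps : R) (heps : 0 < eps)
  (pbar : 'I_N -> R)
  (hpos : forall i, 0 < pbar i)
  (hsol : gs lam del B q s eps pbar = (fun _ => 0))
  (huniq : forall p : 'I_N -> R, (forall i, 0 < p i) ->
             gs lam del B q s eps p = (fun _ => 0) -> p = pbar) :
  nonsingular_Mmatrix (- dgs lam del B q s eps pbar).
Proof.
pose Bp i := \sum_k B i k * pbar k.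
pose d i := (q i (s i))^-1 * del i + lam i + eps + Bp i.
have Bp0 i : 0 <= Bp i by apply: sumr_ge0 => k _; rewrite mulr_ge0 // ltW.
have Qpos i : 0 < (q i (s i))^-1 by rewrite invr_gt0; case: (hqrange i (s i) (hSpos _ hs i)).
have hsi i : (1 - pbar i) * (lam i + eps + Bp i) - (q i (s i))^-1 * del i * pbar i = 0.
  by have := congr1 (fun f => f i) hsol.
have Lpos i : 0 < lam i + eps + Bp i by have := hlam i; have := Bp0 i; lra.
have hp1 i : 0 < 1 - pbar i.
  have : 0 < (1 - pbar i) * (lam i + eps + Bp i).
    by move/eqP: (hsi i); rewrite subr_eq0 => /eqP ->; rewrite !mulr_gt0.
  by rewrite pmulr_lgt0.
have dpos i : 0 < d i by rewrite /d; have := Lpos i; have := mulr_gt0 (Qpos i) (hdel i); lra.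
have key i : d i * pbar i - (1 - pbar i) * Bp i = lam i + eps + pbar i * Bp i.
  have -> : lam i + eps + pbar i * Bp i = lam i + eps + pbar i * Bp i -
     ((1 - pbar i) * (lam i + eps + Bp i) - (q i (s i))^-1 * del i * pbar i)
    by rewrite hsi subr0.
  rewrite /d; ring.
have AE i j : (- dgs lam del B q s eps pbar) i j = (i == j)%:R * d i - (1 - pbar i) * B i j.
  by rewrite !mxE opprB.
pose sc := \sum_i d i.
have dsc i : d i <= sc.
  rewrite /sc (bigD1 i) //= lerDl; apply: sumr_ge0 => j _; exact: ltW.
pose Cm := \matrix_(i, j) ((i == j)%:R * (sc - d i) + (1 - pbar i) * B i j).
have Cm0 i j : 0 <= Cm i j.
  rewrite mxE; apply: addr_ge0; apply: mulr_ge0; rewrite ?ler0n ?subr_ge0 ?dsc // -subr_ge0 ltW // hp1.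
have ACm : - dgs lam del B q s eps pbar = sc%:M - Cm.
  apply/matrixP => a b; rewrite AE !mxE; case: (a == b) => /=; ring.
have hrow i : \sum_j Cm i j * pbar j < sc * pbar i.
  have -> : \sum_j Cm i j * pbar j = (sc - d i) * pbar i + (1 - pbar i) * Bp i.
    under eq_bigr do rewrite mxE mulrDl.
    rewrite big_split /= (bigD1 i) //= eqxx mul1r big1 ?addr0.
      by rewrite /Bp mulr_sumr; congr (_ + _); apply: eq_bigr => j _; rewrite mulrA.
    by move=> j /negbTE; rewrite eq_sym => ->; rewrite !mul0r.
  rewrite -subr_gt0.
  have -> : sc * pbar i - ((sc - d i) * pbar i + (1 - pbar i) * Bp i)
           = d i * pbar i - (1 - pbar i) * Bp i by ring.
  rewrite key; have := hlam i; have := Bp0 i; have := hpos i; have := mulr_ge0 (ltW (hpos i)) (Bp0 i); lra.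
have spec : forall (x : 'cV[R[i]]_N) (mu : R[i]),
    map_mx (real_complex R) Cm *m x = mu *: x -> x != 0 -> `|mu| < real_complex R sc.
  move=> x mu hx xn0.
  have [k hk] : exists k, x k 0 != 0.
    apply/existsP; move: xn0; apply: contraR; rewrite negb_exists => /forallP H.
    apply/eqP/matrixP => i j; rewrite ord1 mxE; apply/eqP; move: (H i); exact: negbNE.
  apply: (@core _ _ Cm pbar sc Cm0 hpos hrow (fun j => x j 0) mu _ k hk) => i.
  by have := congr1 (fun M : 'M[R[i]]_(N,1) => M i 0) hx; rewrite !mxE => <-; apply: eq_bigr => j _; rewrite !mxE.
rewrite /nonsingular_Mmatrix; split; last first.
  rewrite unitmxE unitfE; apply/negP => /eqP hdet.
  have /det0P [w wn0 hw] : \det (- dgs lam del B q s eps pbar)^T == 0 by rewrite det_tr hdet.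
  have hx : map_mx (real_complex R) Cm *m (map_mx (real_complex R) w^T)
        = (real_complex R sc) *: (map_mx (real_complex R) w^T).
    have e : (- dgs lam del B q s eps pbar) *m w^T = 0 by rewrite -[_ *m _]trmxK trmx_mul trmxK hw trmx0.
    rewrite ACm mulmxBl mul_scalar_mx in e.
    move/eqP: e; rewrite subr_eq0 => /eqP e.
    by rewrite -map_mxM -e map_mxZ.
  have := spec _ _ hx; rewrite ger0_norm ?ler0c ?sumr_ge0 ?(fun i _ => ltW (dpos i)) ?ltxx //; last by move=> a _; exact: ltW.
  move=> H; suff: false by []; apply: H; by rewrite map_mx_eq0 trmx_eq0.
split.
  split => [a b hab | a]; rewrite AE.
    by rewrite (negbTE hab) mul0r sub0r oppr_le0 mulr_ge0 // ltW.
  by rewrite eqxx mul1r hBdiag mulr0 subr0 ltW.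
exists sc, Cm; split => //; split => //.
move=> mu.
change (eigenvalue (map_mx (real_complex R) Cm) mu -> `|mu| <= real_complex R sc).
move/eigenvalueP => [v hv vn0].
set g := map_mx (real_complex R) Cm in hv spec *.
have hv0 : v *m (mu%:M - g) = 0 by rewrite mulmxBr hv mul_mx_scalar subrr.
have /det0P [w wn0 hw] : \det (mu%:M - g)^T == 0.
  by rewrite det_tr; apply/det0P; exists v.
have hx : g *m w^T = mu *: w^T.
  have e : (mu%:M - g) *m w^T = 0 by rewrite -[_ *m _]trmxK trmx_mul trmxK hw trmx0.
  rewrite mulmxBl mul_scalar_mx in e.
  by move/eqP: e; rewrite subr_eq0 => /eqP ->.
by apply: ltW; apply: spec hx _; rewrite trmx_eq0.
Qed.
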